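(* Let $\mathcal{O}=(G,x,y)$ be a regular origami. Suppose that for every prime $p$ at least one of the following holds: (1) $\gcd\big(p,\operatorname{ord}(y)\cdot\operatorname{ord}(yx)\big)=1$; or (2) there exist $m_1,m_2\in\mathbb{Z}_{\ge 0}$ with $m_1\not\equiv m_2 \pmod p$ and $\gcd\big(p,\operatorname{ord}(xy^{-m_1})\cdot\operatorname{ord}(xy^{-m_2})\big)=1$. Then the Veech group $\mathrm{SL}(\mathcal{O})$ is a totally non-congruence group.
   Context: A regular origami $(G,x,y)$ is given by a finite group $G$ generated by two elements $x,y$: it is the translation surface obtained from unit squares indexed by the elements $g\in G$, where the right edge of square $g$ is glued to the left edge of square $gx$ and the top edge of square $g$ is glued to the bottom edge of square $gy$ (a normal cover of the torus with deck group $G$). Two regular origamis $(G,x,y)$, $(G',x',y')$ are identified if there is a group isomorphism $G\to G'$ with $x\mapsto x'$, $y\mapsto y'$. The group $\mathrm{SL}(2,\mathbb{Z})$ acts on regular origamis via $S\cdot(G,x,y)=(G,y^{-1},x)$ and $T\cdot(G,x,y)=(G,x,yx^{-1})$, where $S=\begin{pmatrix}0&-1\\1&0\end{pmatrix}$, $T=\begin{pmatrix}1&1\\0&1\end{pmatrix}$ generate $\mathrm{SL}(2,\mathbb{Z})$; this is the action by affine shearing of the square tiling. The Veech group $\mathrm{SL}(\mathcal{O})$ of a (nontrivial) regular origami is the stabilizer of $\mathcal{O}$ under this action; it is a finite index subgroup of $\mathrm{SL}(2,\mathbb{Z})$. A finite index subgroup $\Gamma\le\mathrm{SL}(2,\mathbb{Z})$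 is a totally non-congruence group if for every integer $n\ge 1$ the reduction map $\mathrm{SL}(2,\mathbb{Z})\to\mathrm{SL}(2,\mathbb{Z}/n\mathbb{Z})$ restricted to $\Gamma$ is surjective. *)

(* Defs.v *)
From HB Require Import structures.
From mathcomp Require Import all_boot all_order all_algebra all_fingroup.
Set Implicit Arguments. Unset Strict Implicit. Unset Printing Implicit Defensive.
Import GRing.Theory.

Inductive sl2gen := GS | GSi | GT | GTi.

Local Open Scope ring_scope.

Definition mx2 (a b c d : int) : 'M[int]_2 :=
  \matrix_(i < 2, j < 2)
    if i == 0 :> nat then (if j == 0 :> nat then a else b)
    else (if j == 0 :> nat then c else d).

Definition gen_mx (g : sl2gen) : 'M[int]_2 :=
  match g with
  | GS  => mx2 0 (-1) 1 0
  | GSi => mx2 0 1 (-1) 0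
  | GT  => mx2 1 1 0 1
  | GTi => mx2 1 (-1) 0 1
  end.

Definition word_mx (w : seq sl2gen) : 'M[int]_2 :=
  foldr (fun g M => gen_mx g *m M) 1%:M w.

Local Close Scope ring_scope.
Local Open Scope group_scope.

Definition gen_act (gT : finGroupType) (g : sl2gen) (p : gT * gT) : gT * gT :=
  let: (x, y) := p in
  match g with
  | GS  => (y^-1, x)
  | GSi => (y, x^-1)
  | GT  => (x, y * x^-1)
  | GTi => (x, y * x)
  end.

Definition word_act (gT : finGroupType) (w : seq sl2gen) (p : gT * gT) : gT * gT :=
  foldr (@gen_act gT) p w.

(* Two regular origamis (G,x,y), (G,x',y') on the same group are identified iff
   some automorphism of G maps x to x' and y to y'. *)
Definition origami_iso (gT : finGroupType) (G : {set gT}) (p q : gT * gT) : Prop :=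
  exists2 a : {perm gT}, a \in Aut G & a p.1 = q.1 /\ a p.2 = q.2.

Definition veech_group (gT : finGroupType) (G : {set gT}) (x y : gT)
  (A : 'M[int]_2) : Prop :=
  exists w : seq sl2gen, word_mx w = A /\ origami_iso G (x, y) (word_act w (x, y)).

Local Close Scope group_scope.

(* Gamma (a subgroup of SL(2,Z), given as a predicate) is totally non-congruence:
   for each n >= 1, every element of SL(2, Z/nZ) (represented by an integer
   matrix B with det B = 1 mod n) is the reduction mod n of some element of Gamma. *)
Definition totally_noncongruence (Gamma : 'M[int]_2 -> Prop) : Prop :=
  forall n : nat, (0 < n)%N ->
  forall B : 'M[int]_2, (\det B == 1 %[mod n%:Z])%Z ->
  exists2 A : 'M[int]_2, Gamma A &
    forall i j : 'I_2, (A i j == B i j %[mod n%:Z])%Z.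

(* Main.v *)
Require Import Defs.
From mathcomp Require Import all_boot all_order all_algebra all_fingroup.
From mathcomp Require Import ring zify.
Set Implicit Arguments. Unset Strict Implicit. Unset Printing Implicit Defensive.
Import GRing.Theory Num.Theory.
Local Open Scope ring_scope.

Local Close Scope group_scope.
Local Open Scope ring_scope.

Definition quad (R : Type) := (R * R * R * R)%type.
Definition qmul {R : comNzRingType} (A B : quad R) : quad R :=
  let: (a,b,c,d) := A in let: (a',b',c',d') := B in
  (a*a'+b*c', a*b'+b*d', c*a'+d*c', c*b'+d*d').
Definition qI {R : comNzRingType} : quad R := (1,0,0,1).

Lemma qmulA {R : comNzRingType} (A B C : quad R) : qmul A (qmul B C) = qmul (qmul A B) C.
Proof. case: A => [[[a b] c] d]; case: B => [[[a' b'] c'] d']; case: C => [[[a'' b''] c''] d''] /=.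
congr (_,_,_,_); ring. Qed.
Lemma qmul1 {R : comNzRingType} (A : quad R) : qmul A qI = A.
Proof. case: A => [[[a b] c] d] /=; congr (_,_,_,_); ring. Qed.
Lemma qmul1l {R : comNzRingType} (A : quad R) : qmul qI A = A.
Proof. case: A => [[[a b] c] d] /=; congr (_,_,_,_); ring. Qed.

Definition gq (g : sl2gen) : quad int :=
  match g with
  | GS  => (0, -1, 1, 0)
  | GSi => (0, 1, -1, 0)
  | GT  => (1, 1, 0, 1)
  | GTi => (1, -1, 0, 1)
  end.
Definition wq (w : seq sl2gen) : quad int := foldr (fun g A => qmul (gq g) A) qI w.
Definition q2mx (A : quad int) : 'M[int]_2 := let: (a,b,c,d) := A in mx2 a b c d.

Lemma mx2_mul a b c d a' b' c' d' :
  mx2 a b c d *m mx2 a' b' c' d' = mx2 (a*a'+b*c') (a*b'+b*d') (c*a'+d*c') (c*b'+d*d').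
Proof.
apply/matrixP => i j; rewrite !mxE !big_ord_recr big_ord0 /= !mxE add0r.
by case: i => [[|[|//]] ?]; case: j => [[|[|//]] ?].
Qed.

Lemma mx2_1 : (1%:M : 'M[int]_2) = mx2 1 0 0 1.
Proof.
apply/matrixP => i j; rewrite !mxE.
by case: i => [[|[|//]] ?]; case: j => [[|[|//]] ?].
Qed.

Lemma word_mxE w : word_mx w = q2mx (wq w).
Proof.
elim: w => [|g w IH] /=; first by rewrite mx2_1.
rewrite IH; case: (wq w) => [[[a b] c] d].
by case: g => /=; rewrite mx2_mul.
Qed.

Lemma wq_cat w1 w2 : wq (w1 ++ w2) = qmul (wq w1) (wq w2).
Proof. elim: w1 => [|g w IH]; first exact: (esym (qmul1l _)). by rewrite cat_cons /= IH qmulA. Qed.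

Definition qcong (n : int) (A B : quad int) : Prop :=
  let: (a,b,c,d) := A in let: (a',b',c',d') := B in
  [/\ (n %| a - a')%Z, (n %| b - b')%Z, (n %| c - c')%Z & (n %| d - d')%Z].

Lemma qcong_refl n A : qcong n A A.
Proof. by case: A => [[[a b] c] d] /=; rewrite !subrr !dvdz0. Qed.

Lemma dvdz_mulD n a a' b b' : (n %| a - a')%Z -> (n %| b - b')%Z -> (n %| a * b - a' * b')%Z.
Proof.
move=> h1 h2; have -> : a * b - a' * b' = a * (b - b') + (a - a') * b' by ring.
by apply: rpredD; [apply: dvdz_mull | apply: dvdz_mulr].
Qed.
Lemma dvdz_addD n a a' b b' : (n %| a - a')%Z -> (n %| b - b')%Z -> (n %| (a + b) - (a' + b'))%Z.
Proof.
move=> h1 h2; have -> : (a + b) - (a' + b') = (a - a') + (b - b') by ring.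
by apply: rpredD.
Qed.

Lemma qcong_mul n A A' B B' : qcong n A A' -> qcong n B B' -> qcong n (qmul A B) (qmul A' B').
Proof.
case: A => [[[a b] c] d]; case: A' => [[[a1 b1] c1] d1].
case: B => [[[e f] g] h]; case: B' => [[[e1 f1] g1] h1] /= [? ? ? ?] [? ? ? ?].
by split; apply: dvdz_addD; apply: dvdz_mulD.
Qed.

Lemma qcong_trans n A B C : qcong n A B -> qcong n B C -> qcong n A C.
Proof.
case: A => [[[a b] c] d]; case: B => [[[a1 b1] c1] d1].
case: C => [[[e f] g] h] /= [? ? ? ?] [? ? ? ?].
have H : forall u v w : int, (n %| u - v)%Z -> (n %| v - w)%Z -> (n %| u - w)%Z.
  move=> u v w h1 h2; have -> : u - w = (u - v) + (v - w) by ring.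
  by apply: rpredD.
split; apply: H; eauto.
Qed.

Lemma qcong_dvd n m A B : (m %| n)%Z -> qcong n A B -> qcong m A B.
Proof.
move=> hmn; case: A => [[[a b] c] d]; case: B => [[[a1 b1] c1] d1] /= [? ? ? ?].
by split; apply: dvdz_trans hmn _.
Qed.

Lemma qcong_crt (q r : nat) A B : coprime q r -> qcong q A B -> qcong r A B -> qcong (q * r)%N A B.
Proof.
move=> co; have coz : coprimez q r by rewrite /coprimez /gcdz /=; move/eqP: co => ->.
case: A => [[[a b] c] d]; case: B => [[[a1 b1] c1] d1] /= [? ? ? ?] [? ? ? ?].
by rewrite PoszM; split; rewrite Gauss_dvdz // ; apply/andP; split.
Qed.

Lemma qcong1 A B : qcong 1 A B.
Proof. by case: A => [[[a b] c] d]; case: B => [[[a1 b1] c1] d1] /=; rewrite !dvd1z. Qed.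

Local Close Scope group_scope.
Local Open Scope ring_scope.

Definition P {R : comNzRingType} (u1 u2 K : R) : quad R :=
  (1 - K*u1*u2, K*u1^+2, -(K*u2^+2), 1 + K*u1*u2).

Lemma qcong_P n (u1 u2 K j : int) : (n %| K - j)%Z -> qcong n (P u1 u2 K) (P u1 u2 j).
Proof.
move=> h; rewrite /P /=; split.
- have -> : 1 - K * u1 * u2 - (1 - j * u1 * u2) = (K - j) * (- u1 * u2) by ring. exact: dvdz_mulr.
- have -> : K * u1^+2 - j * u1^+2 = (K - j) * u1^+2 by ring. exact: dvdz_mulr.
- have -> : -(K * u2^+2) - -(j * u2^+2) = (K - j) * (- u2^+2) by ring. exact: dvdz_mulr.
- have -> : 1 + K * u1 * u2 - (1 + j * u1 * u2) = (K - j) * (u1 * u2) by ring. exact: dvdz_mulr.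
Qed.

Lemma P0 {R : comNzRingType} (u1 u2 : R) : P u1 u2 0 = qI.
Proof. rewrite /P /qI; congr (_,_,_,_); ring. Qed.

Lemma wq_Tpow K : wq (nseq K GT) = (1, K%:Z, 0, 1).
Proof.
elim: K => [|K IH] //=. rewrite IH /= intS; congr (_,_,_,_); ring.
Qed.

Fixpoint Lw m := if m is m'.+1 then [:: GSi; GT; GS] ++ Lw m' else [::].
Fixpoint Lwi m := if m is m'.+1 then [:: GSi; GTi; GS] ++ Lwi m' else [::].

Lemma wq_Lw m : wq (Lw m) = (1, 0, - m%:Z, 1).
Proof. elim: m => [|m IH] //=. rewrite IH /= intS; congr (_,_,_,_); ring. Qed.
Lemma wq_Lwi m : wq (Lwi m) = (1, 0, m%:Z, 1).
Proof. elim: m => [|m IH] //=. rewrite IH /= intS; congr (_,_,_,_); ring. Qed.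

Lemma word_act_cat (gT : finGroupType) w1 w2 (p : gT * gT) :
  word_act (w1 ++ w2) p = word_act w1 (word_act w2 p).
Proof. by rewrite /word_act foldr_cat. Qed.

Local Open Scope group_scope.

Lemma act_Tpow (gT : finGroupType) K (u v : gT) :
  word_act (nseq K GT) (u, v) = (u, v * (u^-1)^+K).
Proof. elim: K => [|K IH] /=; first by rewrite expg0 mulg1. by rewrite IH /= expgSr mulgA. Qed.

Lemma act_Lw (gT : finGroupType) m (u v : gT) :
  word_act (Lw m) (u, v) = (u * v^+m, v).
Proof.
elim: m => [|m IH] /=; first by rewrite expg0 mulg1.
by rewrite IH /= (invgK v) expgSr mulgA.
Qed.

Lemma act_Lwi (gT : finGroupType) m (u v : gT) :
  word_act (Lwi m) (u, v) = (u * (v^-1)^+m, v).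
Proof.
elim: m => [|m IH] /=; first by rewrite expg0 mulg1.
by rewrite IH /= expgSr mulgA invgK.
Qed.

Lemma expg_dvd (gT : finGroupType) (u : gT) K : (#[u] %| K)%N -> u ^+ K = 1.
Proof. by case/dvdnP => k ->; rewrite mulnC expgM expg_order expg1n. Qed.

Section Fam.
Variables (gT : finGroupType) (x y : gT).
Definition stab w := word_act w (x, y) = (x, y).

Lemma stab_cat w1 w2 : stab w1 -> stab w2 -> stab (w1 ++ w2).
Proof. by rewrite /stab word_act_cat => h1 h2; rewrite h2. Qed.

Lemma famA m K : (#[x * y ^- m] %| K)%N ->
  stab (Lw m ++ nseq K GT ++ Lwi m) /\ wq (Lw m ++ nseq K GT ++ Lwi m) = P 1 (- m%:Z) K%:Z.
Proof.
move=> hK; split.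
  rewrite /stab !word_act_cat act_Lwi act_Tpow act_Lw.
  have e : (x * y^-1 ^+ m)^-1 ^+ K = 1.
    by rewrite (expgVn y m) expgVn; rewrite expg_dvd // invg1.
  by rewrite e mulg1 (expgVn y m) mulgKV.
rewrite !wq_cat wq_Lw wq_Tpow wq_Lwi /P /=; congr (_,_,_,_); ring.
Qed.

Lemma famB K : (#[y] %| K)%N ->
  stab (GSi :: nseq K GT ++ [:: GS]) /\ wq (GSi :: nseq K GT ++ [:: GS]) = P 0 1 K%:Z.
Proof.
move=> hK; split.
  rewrite /stab -cat_cons word_act_cat /= -/(word_act _ _) act_Tpow invgK.
  by rewrite expg_dvd // mulg1 /= (invgK y).
rewrite -cat_cons wq_cat /= -/(wq _) wq_Tpow /P /=; congr (_,_,_,_); ring.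
Qed.

Lemma famC K : (#[y * x] %| K)%N ->
  stab (GT :: GSi :: nseq K GT ++ [:: GS; GTi]) /\
  wq (GT :: GSi :: nseq K GT ++ [:: GS; GTi]) = P 1 1 K%:Z.
Proof.
move=> hK; split.
  rewrite /stab -!cat_cons word_act_cat /= -/(word_act _ _) act_Tpow invgK.
  by rewrite expg_dvd // mulg1 /= (invgK (y * x)) mulgK.
rewrite -!cat_cons wq_cat /= -/(wq _) wq_Tpow /P /=; congr (_,_,_,_); ring.
Qed.

End Fam.

Local Close Scope group_scope.
Local Open Scope ring_scope.

Section Good.
Variables (gT : finGroupType) (x y : gT).

Definition good (q R : nat) (Q : quad int) :=
  exists w, stab x y w /\ qcong q (wq w) Q /\ qcong R (wq w) qI.

Lemma good_mul q R A B : good q R A -> good q R B -> good q R (qmul A B).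
Proof.
move=> [w1 [s1 [c1 d1]]] [w2 [s2 [c2 d2]]]; exists (w1 ++ w2); split; first exact: stab_cat.
rewrite wq_cat; split; first exact: qcong_mul.
by rewrite -(qmul1 qI); apply: qcong_mul.
Qed.

Lemma good_cong q R A B : good q R A -> qcong q A B -> good q R B.
Proof. move=> [w [s [c d]]] h; exists w; split => //; split => //; exact: qcong_trans c h. Qed.

Lemma good_eq q R A B : good q R A -> A = B -> good q R B.
Proof. by move=> h <-. Qed.

Lemma good_I q R : good q R qI.
Proof. by exists [::]; split => //; split; apply: qcong_refl. Qed.

Lemma atom (u1 u2 : int) (ord q R : nat) : (0 < q)%N -> coprime q (R * ord) ->
  (forall K, (ord %| K)%N -> exists w, stab x y w /\ wq w = P u1 u2 K%:Z) ->
  forall j : int, good q R (P u1 u2 j).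
Proof.
move=> q0 co hfam j.
set j0 := absz (j %% q)%Z.
set K := chinese q (R * ord) j0 0.
have hK1 := chinese_modl co j0 0; have hK2 := chinese_modr co j0 0.
rewrite -/K in hK1 hK2; rewrite mod0n in hK2.
have dK : (R * ord %| K)%N by apply/eqP.
have [w [sw ew]] := hfam K (dvdn_trans (dvdn_mull R (dvdnn ord)) dK).
exists w; split => //; rewrite ew; split.
  apply: qcong_P; rewrite -eqz_mod_dvd; apply/eqP.
  have qz : (q%:Z != 0) by rewrite eqz_nat -lt0n.
  have j0E : j0%:Z = (j %% q)%Z by rewrite /j0 abszE ger0_norm // modz_ge0.
  rewrite modz_nat hK1 -modz_nat j0E modz_mod //.
rewrite -(P0 u1 u2); apply: qcong_P; rewrite subr0.
by rewrite /dvdz /=; apply: dvdn_trans (dvdn_mulr ord (dvdnn R)) dK.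
Qed.


Lemma dvdz_natM (q s : nat) : (Posz q %| Posz (q * s))%Z /\ (Posz s %| Posz (q * s))%Z.
Proof. by split; rewrite /dvdz /=; [apply: dvdn_mulr | apply: dvdn_mull]; apply: dvdnn. Qed.

Lemma combine Q :
  (forall p e R, prime p -> (0 < e)%N -> (0 < R)%N -> coprime p R -> good (p ^ e) R Q) ->
  forall N n s, (n <= N)%N -> (0 < n)%N -> (0 < s)%N -> coprime n s -> good n s Q.
Proof.
move=> H; elim=> [|N IH] n s hnN hn hs co; first by lia.
case: (ltnP 1 n) => hn1; last first.
  have -> : n = 1%N by lia.
  by exists [::]; split => //; split; [exact: qcong1 | exact: qcong_refl].
have pp := pdiv_prime hn1; set p := pdiv n in pp.
have [m cpm nE] := pfactor_coprime pp hn; set e := logn p n in nE.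
have e0 : (0 < e)%N by rewrite logn_gt0 mem_primes pp hn pdiv_dvd.
have q1 : (1 < p ^ e)%N by rewrite -(expn0 p) ltn_exp2l // prime_gt1.
have m0 : (0 < m)%N by move: hn; rewrite nE muln_gt0 => /andP[].
have mn : (m < n)%N by rewrite nE ltn_Pmulr.
have g1 : good (p ^ e) (m * s) Q.
  apply: H => //; first by rewrite muln_gt0 m0.
  by rewrite coprimeMr cpm (coprime_dvdl (pdiv_dvd n) co).
have g2 : good m (p ^ e * s) Q.
  apply: IH; [lia | done | by rewrite muln_gt0 hs andbT expn_gt0 prime_gt0 | ].
  rewrite coprimeMr coprimeXr ?(coprime_sym m p) //.
  by apply: coprime_dvdl co; rewrite nE dvdn_mulr.
move: g1 g2 => [w1 [s1 [c1 d1]]] [w2 [s2 [c2 d2]]]; exists (w1 ++ w2); split; first exact: stab_cat.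
rewrite wq_cat; split; last first.
  rewrite -(qmul1 qI); apply: qcong_mul.
    by apply: qcong_dvd d1; case: (dvdz_natM m s).
  by apply: qcong_dvd d2; case: (dvdz_natM (p ^ e) s).
rewrite nE mulnC; apply: qcong_crt; first by rewrite coprimeXl.
  rewrite -(qmul1 Q); apply: qcong_mul => //.
  by apply: qcong_dvd d2; case: (dvdz_natM (p ^ e) s).
rewrite -(qmul1l Q); apply: qcong_mul => //.
by apply: qcong_dvd d1; case: (dvdz_natM m s).
Qed.

End Good.

Local Close Scope group_scope.
Local Open Scope ring_scope.

Lemma dvdz_Zp q (hq : (1 < q)%N) (n : int) : (q %| n)%Z = (n%:~R == 0 :> 'Z_q).
Proof.
case: n => k.
  by rewrite /dvdz /= -val_eqE /= val_Zp_nat.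
by rewrite NegzE rpredN rmorphN oppr_eq0 /dvdz /= -val_eqE /= val_Zp_nat.
Qed.

Definition qmap q (A : quad int) : quad 'Z_q :=
  let: (a,b,c,d) := A in (a%:~R, b%:~R, c%:~R, d%:~R).

Lemma qmap_mul q A B : qmap q (qmul A B) = qmul (qmap q A) (qmap q B).
Proof.
case: A => [[[a b] c] d]; case: B => [[[a' b'] c'] d'] /=.
by rewrite !rmorphD !rmorphM.
Qed.

Lemma qmap_P q (u1 u2 K : int) : qmap q (P u1 u2 K) = P u1%:~R u2%:~R K%:~R.
Proof. by rewrite /P /= !(rmorphD, rmorphB, rmorphN, rmorphM, rmorphXn, rmorph1). Qed.

Lemma qcong_Zp q (hq : (1 < q)%N) A B : qmap q A = qmap q B -> qcong q A B.
Proof.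
case: A => [[[a b] c] d]; case: B => [[[a' b'] c'] d'] /= [e1 e2 e3 e4].
by split; rewrite dvdz_Zp // rmorphB /= ?e1 ?e2 ?e3 ?e4 subrr.
Qed.

Lemma Zconj {R : comNzRingType} (m1 d a j : R) : a * d = 1 ->
  qmul (qmul (P 1 (-m1) a) (P 1 (-(m1 + d)) (a^+2 * j))) (P 1 (-m1) (-a)) = (1, 0, -j, 1).
Proof.
move=> ad; set c := a^+2 * j.
have -> : qmul (qmul (P 1 (-m1) a) (P 1 (-(m1 + d)) c)) (P 1 (-m1) (-a)) =
  (1 - c*(1 - a*d)*(-m1 - d + m1*(a*d)), c*(1-a*d)^+2, -(c*(-m1 - d + m1*(a*d))^+2),
   1 + c*(1-a*d)*(-m1-d+m1*(a*d))).
  by rewrite /P /=; congr (_,_,_,_); ring.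
rewrite ad subrr; congr (_,_,_,_); try ring.
have -> : c * (- m1 - d + m1 * 1) ^+ 2 = j * (a * d)^+2 by rewrite /c; ring.
by rewrite ad expr1n mulr1.
Qed.

Local Close Scope group_scope.
Local Open Scope ring_scope.

Definition Lq (j : int) : quad int := (1, 0, -j, 1).
Definition Tq (j : int) : quad int := (1, j, 0, 1).

Section PerPrime.
Variables (gT : finGroupType) (x y : gT).

Lemma case1 p e R : prime p -> (0 < e)%N -> coprime p R ->
  coprime p (#[y]%g * #[(y * x)%g]%g)%N ->
  forall j, good x y (p ^ e) R (Lq j) /\ good x y (p ^ e) R (Tq j).
Proof.
move=> pp e0 cR cyx; rewrite coprimeMr in cyx; case/andP: cyx => cy cx.
have q0 : (0 < p ^ e)%N by rewrite expn_gt0 prime_gt0.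
have hL : forall j, good x y (p ^ e) R (Lq j).
  move=> j; apply: (good_eq (A := P 0 1 j)); last by rewrite /P /Lq; congr (_,_,_,_); ring.
  apply: (@atom _ x y 0 1 #[y]%g) => //; first by rewrite coprimeXl // coprimeMr cR.
  by move=> K hK; eexists; exact: famB hK.
have hC : forall j, good x y (p ^ e) R (P 1 1 j).
  apply: (@atom _ x y 1 1 #[(y * x)%g]%g) => //; first by rewrite coprimeXl // coprimeMr cR.
  by move=> K hK; eexists; exact: famC hK.
move=> j; split => //.
apply: (good_eq (A := qmul (qmul (Lq 1) (P 1 1 j)) (Lq (-1)))).
  by apply: good_mul; [apply: good_mul|].
by rewrite /P /Lq /Tq /=; congr (_,_,_,_); ring.
Qed.

Lemma case2 p e R (m1 m2 : nat) : prime p -> (0 < e)%N -> coprime p R ->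
  (m1 < m2)%N -> ~~ (p %| m2 - m1)%N ->
  coprime p (#[(x * y ^- m1)%g]%g * #[(x * y ^- m2)%g]%g)%N ->
  forall j, good x y (p ^ e) R (Lq j) /\ good x y (p ^ e) R (Tq j).
Proof.
move=> pp e0 cR lt12 nd co; rewrite coprimeMr in co; case/andP: co => c1 c2.
set q := (p ^ e)%N.
have q0 : (0 < q)%N by rewrite expn_gt0 prime_gt0.
have q1 : (1 < q)%N by rewrite -(expn0 p) ltn_exp2l // prime_gt1.
have hA : forall (m : nat), coprime p #[(x * y ^- m)%g]%g -> forall j, good x y q R (P 1 (- m%:Z) j).
  move=> m cm; apply: (@atom _ x y 1 (- m%:Z) #[(x * y ^- m)%g]%g) => //.
    by rewrite coprimeXl // coprimeMr cR.
  by move=> K hK; eexists; exact: famA hK.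
set dl := (m2 - m1)%N.
have du : (dl%:R : 'Z_q) \is a GRing.unit.
  by rewrite unitZpE // coprimeXl // prime_coprime.
set a0 : nat := val ((dl%:R : 'Z_q)^-1).
have aE : (a0%:Z%:~R : 'Z_q) = (dl%:R : 'Z_q)^-1.
  by rewrite /a0 -pmulrn natr_Zp.
have hL : forall j, good x y q R (Lq j).
  move=> j.
  apply: (good_cong (A := qmul (qmul (P 1 (- m1%:Z) a0) (P 1 (- m2%:Z) (a0%:Z^+2 * j))) (P 1 (- m1%:Z) (- a0%:Z)))).
    by apply: good_mul; [apply: good_mul|]; apply: hA.
  apply: qcong_Zp => //.
  rewrite !qmap_mul !qmap_P.
  have m2E : ((- m2%:Z)%:~R : 'Z_q) = - (m1%:R + dl%:R).
    by rewrite rmorphN /= -natrD subnKC 1?ltnW // -pmulrn.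
  rewrite m2E !intrN !expr2 !intrM aE rmorph1 -pmulrn -expr2 Zconj; last by rewrite mulVr.
  by rewrite /Lq /= intrN rmorph1 rmorph0.
move=> j; split => //.
apply: (good_eq (A := qmul (qmul (Lq (- m1%:Z)) (P 1 (- m1%:Z) j)) (Lq m1%:Z))).
  by apply: good_mul; [apply: good_mul|] => //; apply: hA.
by rewrite /P /Lq /Tq /=; congr (_,_,_,_); ring.
Qed.

End PerPrime.

Local Close Scope group_scope.
Local Open Scope ring_scope.

Section Gens.
Variables (gT : finGroupType) (x y : gT).
Hypothesis H : forall p : nat, prime p ->
     coprime p (#[y]%g * #[(y * x)%g]%g)%N
     \/ exists m1 m2 : nat, m1 != m2 %[mod p] /\
          coprime p (#[(x * y ^- m1)%g]%g * #[(x * y ^- m2)%g]%g)%N.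

Lemma perprime p e R : prime p -> (0 < e)%N -> (0 < R)%N -> coprime p R ->
  forall g, good x y (p ^ e) R (gq g).
Proof.
move=> pp e0 R0 cR.
have key : forall j, good x y (p ^ e) R (Lq j) /\ good x y (p ^ e) R (Tq j).
  case: (H pp) => [c1 | [m1 [m2 [ne co]]]]; first exact: case1.
  case: (ltngtP m1 m2) => h.
  - apply: (case2 pp e0 cR h) => //.
    by rewrite -(eqn_mod_dvd p (ltnW h)) eq_sym.
  - apply: (case2 pp e0 cR h).
      by rewrite -(eqn_mod_dvd p (ltnW h)).
    by rewrite mulnC.
  - by rewrite h eqxx in ne.
case.
- apply: (good_eq (A := qmul (qmul (Tq (-1)) (Lq (-1))) (Tq (-1)))).
    by apply: good_mul; [apply: good_mul|]; apply key.
  by rewrite /Tq /Lq /=; congr (_,_,_,_); ring.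
- apply: (good_eq (A := qmul (qmul (Tq 1) (Lq 1)) (Tq 1))).
    by apply: good_mul; [apply: good_mul|]; apply key.
  by rewrite /Tq /Lq /=; congr (_,_,_,_); ring.
- exact: (proj2 (key 1)).
- exact: (proj2 (key (-1))).
Qed.

Lemma good_word n v : (0 < n)%N -> good x y n 1 (wq v).
Proof.
move=> n0; elim: v => [|g v IH]; first exact: good_I.
apply: good_mul IH.
apply: (combine (Q := gq g)) (leqnn n) n0 _ (coprimen1 n) => //.
by move=> p e R pp e0 R0 cR; apply: perprime.
Qed.

End Gens.

Local Close Scope group_scope.
Local Open Scope ring_scope.
Import Order.TTheory.

Definition qdet (A : quad int) : int := let: (a,b,c,d) := A in a * d - b * c.
Lemma qdet_mul A B : qdet (qmul A B) = qdet A * qdet B.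
Proof.
case: A => [[[a b] c] d]; case: B => [[[a' b'] c'] d'] /=; ring.
Qed.
Lemma qdet_wq v : qdet (wq v) = 1.
Proof.
elim: v => [|g v IH] //=; rewrite qdet_mul IH mulr1; by case: g.
Qed.

Lemma wq_cons g v : wq (g :: v) = qmul (gq g) (wq v).
Proof. by []. Qed.

Definition tpow (z : int) := if (0 <= z) then nseq (absz z) GT else nseq (absz z) GTi.

Lemma wq_Tipow K : wq (nseq K GTi) = (1, - K%:Z, 0, 1).
Proof.
elim: K => [|K IH] //=. rewrite IH /= intS; congr (_,_,_,_); ring.
Qed.

Lemma wq_tpow z : wq (tpow z) = Tq z.
Proof.
rewrite /tpow; case: ifP => hz.
  by rewrite wq_Tpow /Tq abszE ger0_norm.
rewrite wq_Tipow /Tq abszE ltr0_norm ?opprK //.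
by rewrite ltNge hz.
Qed.

Lemma euclid N (a c : int) : (absz c < N)%N ->
  exists v g al be ga de, wq v = (al, be, ga, de) /\ a = al * g /\ c = ga * g.
Proof.
elim: N a c => [|N IH] a c hc; first by [].
case: (eqVneq c 0) => [-> | cn].
  by exists [::], a, 1, 0, 0, 1; rewrite mul1r mul0r.
set qq := (a %/ c)%Z; set r := (a %% c)%Z.
have r0 : 0 <= r by apply: modz_ge0.
have rc : r < `|c| by apply: ltz_mod.
have hr : (absz r < N)%N.
  have : (absz r < absz c)%N.
    by rewrite -ltz_nat !abszE ger0_norm.
  move: hc; lia.
have [v' [g [al [be [ga [de [E [h1 h2]]]]]]]] := IH (- c) r hr.
exists (tpow qq ++ GSi :: v'), g, (- qq * al + ga), (- qq * be + de), (- al), (- be).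
split.
  by rewrite wq_cat wq_cons E wq_tpow /Tq /=; congr (_,_,_,_); ring.
have hc' : c = - (al * g) by rewrite -h1 opprK.
split; last by rewrite hc'; ring.
rewrite {1}(divz_eq a c) -/qq -/r h2 hc'; ring.
Qed.

Lemma qmul_adj (al be ga de b d g : int) : al*de - be*ga = 1 ->
  qmul (al,be,ga,de) (g, de*b - be*d, 0, al*d - ga*b) = (al*g, b, ga*g, d).
Proof.
move=> h; rewrite /=; congr (_,_,_,_); try ring.
  apply/eqP; rewrite -subr_eq0.
  have -> : al * (de * b - be * d) + be * (al * d - ga * b) - b = b * (al*de - be*ga - 1) by ring.
  by rewrite h subrr mulr0.
apply/eqP; rewrite -subr_eq0.
have -> : ga * (de * b - be * d) + de * (al * d - ga * b) - d = d * (al*de - be*ga - 1) by ring.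
by rewrite h subrr mulr0.
Qed.

Lemma liftSL (n : nat) a b c d : (0 < n)%N -> (n %| a*d - b*c - 1)%Z ->
  exists v, qcong n (wq v) (a,b,c,d).
Proof.
move=> n0 hdet.
have [v1 [g [al [be [ga [de [E1 [ha hc]]]]]]]] := euclid a (ltnSn (absz c)).
have d1 : al*de - be*ga = 1 by have := qdet_wq v1; rewrite E1.
set b' := de*b - be*d; set d' := al*d - ga*b.
have Nid : qmul (al,be,ga,de) (g, b', 0, d') = (a,b,c,d) by rewrite qmul_adj // -ha -hc.
have [v2 [h [al2 [be2 [ga2 [de2 [E2 [hg hn]]]]]]]] := euclid g (ltnSn (absz n%:Z)).
have d2 : al2*de2 - be2*ga2 = 1 by have := qdet_wq v2; rewrite E2.
set e := de2*b' - be2*d'; set f := al2*d' - ga2*b'.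
have N'id : qmul (al2,be2,ga2,de2) (h, e, 0, f) = (g, b', n%:Z, d')
  by rewrite qmul_adj // -hg -hn.
have hf : (n %| h*f - 1)%Z.
  have -> : h*f - 1 = (a*d - b*c - 1) - n%:Z * b'.
    by rewrite hn ha hc hg /f /d'; ring.
  by apply: rpredB => //; apply: dvdz_mulr; apply: dvdzz.
have hu : h \is a intUnitRing.unitz.
  case/dvdzP: hf => k hk; apply: (@intUnitRing.unitzPl _ (f - k * ga2)).
  have -> : (f - k * ga2) * h = (h * f - 1) - k * (ga2 * h) + 1 by ring.
  by rewrite hk -hn subrr add0r.
have [v3 hv3] : exists v3, qcong n (wq v3) (h, e, 0, f).
  move: hu; rewrite qualifE => /orP[/eqP h1 | /eqP h1].
    exists (tpow e); rewrite wq_tpow /Tq /= h1 !subrr; split; rewrite ?dvdz0 //.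
    by rewrite -opprB rpredN; move: hf; rewrite h1 mul1r.
  exists (GS :: GS :: tpow (-e)); rewrite !wq_cons wq_tpow.
  have -> : qmul (gq GS) (qmul (gq GS) (Tq (- e))) = (-1, e, 0, -1).
    by rewrite /Tq /=; congr (_,_,_,_); ring.
  rewrite h1 /= !subrr; split; rewrite ?dvdz0 //.
  have -> : -1 - f = -1 * f - 1 by ring.
  by move: hf; rewrite h1.
exists (v1 ++ v2 ++ v3); rewrite !wq_cat E1 E2 -Nid.
apply: qcong_mul; first exact: qcong_refl.
apply: qcong_trans (qcong_mul (qcong_refl _ _) hv3) _; rewrite N'id /=.
by rewrite !subrr subr0 !dvdz0 dvdzz.
Qed.

Local Close Scope group_scope.
Local Open Scope ring_scope.

Lemma det2 (B : 'M[int]_2) : \det B = B 0 0 * B 1 1 - B 0 1 * B 1 0.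
Proof.
rewrite (expand_det_row _ 0) !big_ord_recr big_ord0 /= /cofactor !det_mx11 !mxE /=.
have e1 : lift 0 0 = 1 :> 'I_2 by apply/val_inj.
have e2 : widen_ord (leqnSn 1) ord_max = 0 :> 'I_2 by apply/val_inj.
have e3 : lift 1 0 = 0 :> 'I_2 by apply/val_inj.
have e4 : ord_max = 1 :> 'I_2 by apply/val_inj.
rewrite e2 e1 e4 e3 add0r expr0 mul1r expr1 mulN1r mulrN.
by [].
Qed.

Local Close Scope ring_scope.
Local Close Scope group_scope.
Unset Implicit Arguments.

Theorem mainTheorem2 (gT : finGroupType) (G : {group gT}) (x y : gT)
  (hgen : <<[set x; y]>>%g = G) :
  (forall p : nat, prime p ->
     coprime p (#[y]%g * #[(y * x)%g]%g)%N
     \/ exists m1 m2 : nat, m1 != m2 %[mod p] /\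
          coprime p (#[(x * y ^- m1)%g]%g * #[(x * y ^- m2)%g]%g)%N) ->
  totally_noncongruence (veech_group G x y).
Proof.
move=> H n n0 B hB.
rewrite eqz_mod_dvd det2 in hB.
have [v hv] := liftSL n0 hB.
have [w [sw [cw _]]] := good_word H v n0.
exists (word_mx w).
  exists w; split => //; exists 1%g; first exact: group1.
  by rewrite sw !perm1.
have hc := qcong_trans cw hv.
move=> i j; rewrite word_mxE eqz_mod_dvd.
move: hc; case: (wq w) => [[[a b] c] d] /= [h1 h2 h3 h4].
have hi : forall k : 'I_2, k = 0%R \/ k = 1%R.
  by case=> [[|[|//]] ?]; [left|right]; apply/val_inj.
by case: (hi i) => ->; case: (hi j) => ->; rewrite !mxE /=.
Qed.
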